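(* Let $(X,\kappa)$ be a finite digital image and $f:X\to X$ a continuous self-map with $L(f)\neq 0$. Then there is a simplex $\sigma\subseteq X$ (a nonempty set of pairwise adjacent points) with $f(\sigma)=\sigma$.
   Context: A digital image is a pair $(X,\kappa)$ where $X$ is a set and $\kappa$ is a symmetric irreflexive relation on $X$ (the adjacency). Write $x\leftrightarrow y$ if adjacent, $x\Leftrightarrow y$ if adjacent or equal. A map $f$ is continuous if $x\leftrightarrow y$ implies $f(x)\Leftrightarrow f(y)$. Simplicial homology: a $q$-simplex of $X$ is a set of $q+1$ pairwise adjacent points. $C_q(X)$ is the free abelian group generated by ordered $q$-simplices $\langle x_0,\dots,x_q\rangle$ modulo $\langle x_{\rho(0)},\dots,x_{\rho(q)}\rangle=\operatorname{sgn}(\rho)\langle x_0,\dots,x_q\rangle$, with boundary $\partial\langle x_0,\dots,x_q\rangle=\sum_{i=0}^q(-1)^i\langle x_0,\dots,\widehat{x_i},\dots,x_q\rangle$; $H_q(X)$ is its homology. For continuous $f$, $f_q\langle p_0,\dots,p_q\rangle=\langle f(p_0),\dots,f(p_q)\rangle$ (interpreted as $0$ if the image has fewer than $q+1$ points); this is a chain map inducing $f_{*,q}$ on $H_q$. The simplicial Lefschetz number of a self-map $f$ of a finite image is $L(f)=\sum_{q\ge0}(-1)^q\operatorname{tr}(f_{*,q})$, traces taken on $H_q(X)\otimes\mathbb Q$. *)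

(* Defs.v *)
From HB Require Import structures.
From mathcomp Require Import all_boot all_order all_algebra all_fingroup.
Set Implicit Arguments. Unset Strict Implicit. Unset Printing Implicit Defensive.
Import GRing.Theory Num.Theory.
Local Open Scope ring_scope.

(* A digital image is (T, e) with T : finType and e : rel T symmetric and
   irreflexive.  Chains are taken with rational coefficients. *)

Section DigitalHomology.
Variables (T : finType) (e : rel T).

Definition simplex (S : {set T}) : bool :=
  (S != set0) && [forall x in S, forall y in S, (x != y) ==> e x y].

Definition qsimp (q : nat) : {set {set T}} :=
  [set S : {set T} | simplex S && (#|S| == q.+1)].

Definition nq (q : nat) : nat := #|qsimp q|.

Definition simp (q : nat) (i : 'I_(nq q)) : {set T} := enum_val i.

(* the ordered simplex <t_0,...,t_q> as an element of C_q(X;Q), expressed in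
   the basis of canonically oriented simplices <enum S> (points listed in the
   enumeration order of T):  <t> = sgn(rho) <enum S> when t = (enum S) o rho,
   and <t> = 0 when t is not injective (fewer than q+1 points). *)
Definition ochain (q : nat) (t : 'I_q.+1 -> T) : 'rV[rat]_(nq q) :=
  \row_(i < nq q)
    \sum_(r : 'S_q.+1 | [forall k, t k == nth (t k) (enum (simp i)) (r k)])
      (-1) ^+ (odd_perm r).

Variable x0 : T. (* default point, only used for nth *)

Definition can (q : nat) (i : 'I_(nq q)) : 'I_q.+1 -> T :=
  fun k => nth x0 (enum (simp i)) k.

(* boundary  d_{q+1} : C_{q+1} -> C_q  (acting on row vectors) *)
Definition bd (q : nat) : 'M[rat]_(nq q.+1, nq q) :=
  \matrix_(i < nq q.+1)
    (\sum_(k < q.+2) (-1) ^+ k *: ochain (fun j : 'I_q.+1 => can i (lift k j))).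

Definition chmx (f : T -> T) (q : nat) : 'M[rat]_(nq q) :=
  \matrix_(i < nq q) ochain (fun k => f (can i k)).

End DigitalHomology.

(* Trace of the map induced by F : C -> C on H = ker Dq / im Dq1, where
   Dq : C -> C' is the outgoing boundary and Dq1 : C'' -> C the incoming one.
   H is identified with a complement W of B = im Dq1 in Z = ker Dq; the induced
   map sends w in W to the W-component (along B) of wF. *)
Definition homtr (n m p : nat) (Dq : 'M[rat]_(n, m)) (Dq1 : 'M[rat]_(p, n))
    (F : 'M[rat]_n) : rat :=
  let Z := kermx Dq in
  let B := (<<Dq1>>)%MS in
  let W := (Z :\: B)%MS in
  let Wb := row_base W in
  \tr (Wb *m F *m proj_mx W B *m pinvmx Wb).

Definition htrace (T : finType) (e : rel T) (x0 : T) (f : T -> T) (q : nat)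
  : rat :=
  match q with
  | 0 => homtr (0 : 'M[rat]_(nq e 0, 0)) (bd e x0 0) (chmx e x0 f 0)
  | q'.+1 => homtr (bd e x0 q') (bd e x0 q'.+1) (chmx e x0 f q'.+1)
  end.

(* Simplicial Lefschetz number; H_q = 0 for q >= #|T| (no q-simplices),
   and the empty image has L = 0. *)
Definition lefschetz (T : finType) (e : rel T) (f : T -> T) : rat :=
  match [pick x : T] with
  | Some x0 => \sum_(q < #|T|.+1) (-1) ^+ q * htrace e x0 f q
  | None => 0
  end.

Definition dcontinuous (T : finType) (e : rel T) (f : T -> T) : Prop :=
  forall x y, e x y -> f x = f y \/ e (f x) (f y).

(* Main.v *)
Require Import Defs.
From mathcomp Require Import all_boot all_order all_algebra all_fingroup.
From mathcomp Require Import zify ring lra.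
Set Implicit Arguments. Unset Strict Implicit. Unset Printing Implicit Defensive.
Import GRing.Theory Num.Theory.
Local Open Scope ring_scope.


Definition tB (p n : nat) (D : 'M[rat]_(p, n)) (F : 'M[rat]_n) : rat :=
  \tr (pinvmx D *m D *m F).

Lemma sub_mulP k r n (X : 'M[rat]_(k, n)) (U : 'M[rat]_(r, n)) (P : 'M[rat]_n) :
  U *m P = U -> (X <= U)%MS -> X *m P = X.
Proof. by move=> HU /submxP[Y ->]; rewrite -mulmxA HU. Qed.

Lemma trGL r n (U : 'M[rat]_(r, n)) (P F : 'M[rat]_n) :
  (P <= U)%MS -> U *m P = U -> (U *m F <= U)%MS -> \tr (P *m F) = tB U F.
Proof.
move=> sPU UP sUF; rewrite /tB.
set Q := pinvmx U *m U.
have UQ : U *m Q = U by rewrite /Q mulmxA mulmxKpV.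
have QU : (Q *m F <= U)%MS.
  by rewrite (submx_trans (submxMr _ (submxMl _ _)) sUF).
rewrite -(sub_mulP UP QU) [RHS]mxtrace_mulC mulmxA.
by rewrite (sub_mulP UQ sPU).
Qed.

Lemma perq n m p (Dout : 'M[rat]_(n, m)) (Din : 'M[rat]_(p, n)) (F : 'M[rat]_n)
  (F' : 'M[rat]_m) (F'' : 'M[rat]_p) :
  Din *m Dout = 0 -> F *m Dout = Dout *m F' -> F'' *m Din = Din *m F ->
  \tr F = homtr Dout Din F + tB Din F + tB Dout F'.
Proof.
move=> H1 H2 H3.
set Z := kermx Dout.
set B := (<<Din>>)%MS.
set W := (Z :\: B)%MS.
set PiW := proj_mx W B; set PiB := proj_mx B W.
have dxWB : (W :&: B = 0)%MS by apply: capmx_diff.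
have dxBW : (B :&: W = 0)%MS by rewrite capmxC.
have sBZ : (B <= Z)%MS by rewrite genmxE; apply/sub_kermxP.
have sWZ : (W <= Z)%MS by apply: diffmxSl.
have sZWB : (Z <= W + B)%MS.
  rewrite -{1}(addsmx_diff_cap_eq Z B) addsmxS //.
  by rewrite capmxSr.
have ZD : Z *m Dout = 0 by apply: mulmx_ker.
have sZF : (Z *m F <= Z)%MS by apply/sub_kermxP; rewrite -mulmxA H2 mulmxA ZD mul0mx.
have sBF : (Din *m F <= Din)%MS by rewrite -H3 submxMl.
set PZ := pinvmx Z *m Z.
have ZPZ : Z *m PZ = Z by rewrite mulmxA mulmxKpV.
have sPZ : (PZ <= Z)%MS by apply: submxMl.
have PZD : PZ *m Dout = 0 by rewrite -mulmxA ZD mulmx0.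
clearbody PZ.
have E1 : \tr F = \tr (PZ *m F) + \tr ((1%:M - PZ) *m F).
  by rewrite mulmxBl mul1mx raddfB /= addrC subrK.
have E2 : \tr ((1%:M - PZ) *m F) = tB Dout F'.
  rewrite /tB; set pD := pinvmx Dout; rewrite -(mulmxA pD) -H2. rewrite mulmxA [RHS]mxtrace_mulC mulmxA.
  set R := Dout *m pD.
  set X := R - 1%:M + PZ.
  have sXZ : (X <= Z)%MS.
    apply/sub_kermxP; rewrite !mulmxDl mulNmx mul1mx PZD addr0 /R /pD.
    by rewrite mulmxKpV // subrr.
  have sXF : (X *m F <= Z)%MS by apply: submx_trans (submxMr _ sXZ) sZF.
  have trX : \tr (X *m F) = 0.
    rewrite -(sub_mulP ZPZ sXF) mxtrace_mulC !mulmxA.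
    have -> : PZ *m X = 0.
      rewrite !mulmxDr mulmxN mulmx1 (sub_mulP ZPZ sPZ) mulmxA PZD mul0mx.
      by rewrite sub0r addNr.
    by rewrite !mul0mx mxtrace0.
  apply/eqP; rewrite -subr_eq0 -raddfB /= -mulmxBl.
  have -> : 1%:M - PZ - R = - X by rewrite /X !opprD opprK addrC addrA.
  by rewrite mulNmx raddfN /= trX oppr0.
have sPZF : (PZ *m F <= W + B)%MS.
  by apply: submx_trans sZWB; apply: submx_trans (submxMr _ sPZ) sZF.
have sPiB : (PiB <= B)%MS by rewrite -[PiB]mul1mx proj_mx_sub.
have sPiW : (PiW <= W)%MS by rewrite -[PiW]mul1mx proj_mx_sub.
have E3 : \tr (PZ *m F) = \tr (PiW *m F) + \tr (PiB *m F).
  have -> : PZ *m F = PZ *m F *m PiW + PZ *m F *m PiB by rewrite add_proj_mx.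
  rewrite raddfD /=.
  rewrite (mxtrace_mulC (PZ *m F) PiW) (mxtrace_mulC (PZ *m F) PiB) !mulmxA.
  rewrite (sub_mulP ZPZ (submx_trans sPiW sWZ)).
  by rewrite (sub_mulP ZPZ (submx_trans sPiB sBZ)).
have E4 : \tr (PiB *m F) = tB Din F.
  have sBD : (B <= Din)%MS by rewrite genmxE.
  have sDB : (Din <= B)%MS by rewrite genmxE.
  apply: trGL; [exact: submx_trans sPiB sBD | exact: proj_mx_id dxBW sDB | exact: sBF].
have E5 : homtr Dout Din F = \tr (PiW *m F).
  rewrite /homtr -/Z -/B -/W -/PiW.
  set Wb := row_base W; set pW := pinvmx Wb.
  have WQ : W *m (pW *m Wb) = W by rewrite mulmxA mulmxKpV // eq_row_base.
  clearbody pW Wb PiW.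
  rewrite (mxtrace_mulC (Wb *m F *m PiW) pW) !mulmxA.
  rewrite (mxtrace_mulC (pW *m Wb *m F) PiW) !mulmxA.
  by rewrite -(mulmxA PiW) (sub_mulP WQ sPiW).
by rewrite E1 E2 E3 E4 E5.
Qed.


Lemma vNv n (v : 'rV[rat]_n) : v = - v -> v = 0.
Proof.
move=> H; apply/rowP => j; move/rowP/(_ j): H; rewrite !mxE => H; lra.
Qed.

Section Comb.
Variables (T : finType) (e : rel T) (x0 : T).

Lemma simpP q (i : 'I_(nq e q)) : simp i \in qsimp e q.
Proof. exact: enum_valP. Qed.

Lemma simp_card q (i : 'I_(nq e q)) : #|simp i| = q.+1.
Proof. by move: (simpP i); rewrite inE => /andP[_ /eqP]. Qed.

Lemma size_enum_simp q (i : 'I_(nq e q)) : size (enum (simp i)) = q.+1.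
Proof. by rewrite -cardE simp_card. Qed.

Lemma simp_adj q (i : 'I_(nq e q)) x y :
  x \in simp i -> y \in simp i -> x != y -> e x y.
Proof.
move: (simpP i); rewrite inE /simplex => /andP[/andP[_ /forall_inP H] _] hx hy.
by move: (H x hx) => /forall_inP/(_ y hy)/implyP.
Qed.

Lemma cani_inj q (i : 'I_(nq e q)) : injective (can x0 i).
Proof.
move=> a b /eqP; rewrite /can nth_uniq ?size_enum_simp ?enum_uniq //.
by move/eqP/val_inj.
Qed.

Lemma can_mem q (i : 'I_(nq e q)) k : can x0 i k \in simp i.
Proof. by rewrite /can -mem_enum mem_nth // size_enum_simp. Qed.

Lemma can_surj q (i : 'I_(nq e q)) x : x \in simp i ->
  exists k, can x0 i k = x.
Proof.
move=> hx; have hl : (index x (enum (simp i)) < q.+1)%N.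
  by rewrite -(size_enum_simp i) index_mem mem_enum.
by exists (Ordinal hl); rewrite /can /= nth_index // mem_enum.
Qed.

Lemma ochainE q (t : 'I_q.+1 -> T) i : ochain e t 0 i =
  \sum_(r : 'S_q.+1 | [forall k, t k == can x0 i (r k)]) (-1) ^+ odd_perm r.
Proof.
rewrite mxE; apply: eq_bigl => r; apply: eq_forallb => k.
by rewrite /can (set_nth_default x0) // size_enum_simp.
Qed.

Lemma ochain_ext q (t t' : 'I_q.+1 -> T) : t =1 t' -> ochain e t = ochain e t'.
Proof.
move=> H; apply/rowP => i; rewrite !mxE; apply: eq_bigl => r.
by apply: eq_forallb => k; rewrite H.
Qed.

Lemma ochain_perm q (t : 'I_q.+1 -> T) (s : 'S_q.+1) :
  ochain e (fun k => t (s k)) = (-1) ^+ odd_perm s *: ochain e t.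
Proof.
apply/rowP => i; rewrite [in RHS]mxE !ochainE big_distrr /=.
rewrite (reindex_inj (mulgI s)) /=; apply: eq_big => r.
  apply/forallP/forallP => H k.
    by move: (H ((s^-1)%g k)); rewrite permM permKV.
  by rewrite permM; apply: H.
by rewrite odd_permM signr_addb.
Qed.

Lemma ochain_noninj q (t : 'I_q.+1 -> T) a b : a != b -> t a = t b ->
  ochain e t = 0.
Proof.
move=> ab tab; apply: vNv.
rewrite -{1}(@ochain_ext _ (fun k => t (tperm a b k)) t).
  by rewrite ochain_perm odd_tperm ab expr1 scaleN1r.
by move=> k; case: tpermP => // ->.
Qed.

Lemma ochain_can q (i : 'I_(nq e q)) : ochain e (can x0 i) = delta_mx 0 i.
Proof.
apply/rowP => j; rewrite ochainE mxE eqxx /=.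
case: (eqVneq j i) => [->|ji].
  rewrite (big_pred1 (1%g : 'S_q.+1)) ?odd_perm1 ?expr0 ?eqxx // => r /=.
  apply/forallP/eqP => [H | ->]; last by move=> k; rewrite perm1.
  by apply/permP => k; rewrite perm1; apply: cani_inj; apply/esym/eqP/H.
rewrite big_pred0 // => r; apply/negP => /forallP H.
have sij : simp i \subset simp j.
  apply/subsetP => x /(can_surj) [k <-].
  by rewrite (eqP (H k)) can_mem.
have : simp i == simp j by rewrite eqEcard sij !simp_card /=.
by move/eqP/enum_val_inj => ij; rewrite ij eqxx in ji.
Qed.


Lemma ochain_rep q (t : 'I_q.+1 -> T) : injective t ->
  (forall a b, a != b -> e (t a) (t b)) ->
  exists j : 'I_(nq e q), exists rho : 'S_q.+1, forall k, t k = can x0 j (rho k).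
Proof.
move=> tinj tadj.
set S := t @: [set: 'I_q.+1].
have HS : S \in qsimp e q.
  rewrite inE /simplex card_imset // cardsT card_ord eqxx andbT.
  apply/andP; split.
    by apply/set0Pn; exists (t ord0); apply: imset_f; rewrite inE.
  apply/forall_inP => x /imsetP [a _ ->]; apply/forall_inP => y /imsetP [b _ ->].
  apply/implyP => hab; apply: tadj; apply: contraNneq hab => ->.
  by [].
set j := enum_rank_in HS S.
have sj : simp j = S by rewrite /simp /j enum_rankK_in.
have tin : forall k, t k \in enum (simp j).
  by move=> k; rewrite mem_enum sj imset_f // inE.
have ilt : forall k, (index (t k) (enum (simp j)) < q.+1)%N.
  by move=> k; rewrite -(size_enum_simp j) index_mem tin.
pose rf k : 'I_q.+1 := inord (index (t k) (enum (simp j))).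
have rfE : forall k, can x0 j (rf k) = t k.
  by move=> k; rewrite /can /rf inordK ?ilt // nth_index.
have rinj : injective rf.
  by move=> a b hab; apply: tinj; rewrite -rfE hab rfE.
exists j, (perm rinj) => k; by rewrite permE rfE.
Qed.

Lemma ochain_mul q m (M : 'M[rat]_(nq e q, m)) (Phi : ('I_q.+1 -> T) -> 'rV[rat]_m) :
  (forall j, row j M = Phi (can x0 j)) ->
  (forall t t', t =1 t' -> Phi t = Phi t') ->
  (forall t (s : 'S_q.+1), Phi (fun k => t (s k)) = (-1) ^+ odd_perm s *: Phi t) ->
  (forall t a b, a != b -> t a = t b -> Phi t = 0) ->
  forall t, (forall a b, t a != t b -> e (t a) (t b)) -> ochain e t *m M = Phi t.
Proof.
move=> HM Hext Hperm H0 t tadj.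
case: (boolP [exists a, exists b, (a != b) && (t a == t b)]).
  move=> /existsP [a /existsP [b /andP [ab /eqP tab]]].
  by rewrite (ochain_noninj ab tab) (H0 _ _ _ ab tab) mul0mx.
move=> /existsPn Hn.
have tinj : injective t.
  move=> a b tab; apply/eqP; move: (Hn a) => /existsPn/(_ b).
  by rewrite tab eqxx andbT negbK.
have tadj' : forall a b, a != b -> e (t a) (t b).
  by move=> a b ab; apply: tadj; rewrite (inj_eq tinj).
have [j [rho Hr]] := ochain_rep tinj tadj'.
rewrite (ochain_ext Hr) ochain_perm ochain_can -scalemxAl -rowE HM.
by rewrite (Hext _ _ Hr) Hperm.
Qed.

Definition bdy q (t : 'I_q.+2 -> T) : 'rV[rat]_(nq e q) :=
  \sum_(k < q.+2) (-1) ^+ k *: ochain e (fun j => t (lift k j)).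

Lemma bdy_ext q (t t' : 'I_q.+2 -> T) : t =1 t' -> bdy t = bdy t'.
Proof.
by move=> H; apply: eq_bigr => k _; congr (_ *: _); apply: ochain_ext => j; rewrite H.
Qed.

Lemma sign_aux (k j : nat) (p : bool) :
  (-1) ^+ k * (-1) ^+ p = (-1) ^+ (odd k (+) odd j (+) p) * (-1) ^+ j :> rat.
Proof.
rewrite -(@signr_odd _ k) -(@signr_odd _ j).
by case: (odd k); case: (odd j); case: p; rewrite /= ?expr0 ?expr1 ?mulr1 ?mul1r ?mulrNN ?mulr1.
Qed.

Lemma bdy_perm q (t : 'I_q.+2 -> T) (s : 'S_q.+2) :
  bdy (fun k => t (s k)) = (-1) ^+ odd_perm s *: bdy t.
Proof.
pose ulsf i (s : 'S_q.+2) k := odflt k (unlift (s i) (s (lift i k))).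
have ulsfK i (s' : 'S_q.+2) k: lift (s' i) (ulsf i s' k) = s' (lift i k).
  rewrite /ulsf; have:= neq_lift i k.
  by rewrite -(can_eq (permK s')) => /unlift_some[] ? ? ->.
have inj_ulsf i (s' : 'S_q.+2) : injective (ulsf i s').
  apply: can_inj (ulsf (s' i) (s'^-1)%g) _ => k'.
  by rewrite {1}/ulsf ulsfK !permK liftK.
rewrite /bdy scaler_sumr [RHS](reindex_inj (@perm_inj _ s)) /=.
apply: eq_bigr => k _.
pose pi := perm (inj_ulsf k s).
have sE : s = lift_perm k (s k) pi.
  apply/permP => x; case: (unliftP k x) => [x'|] ->; last by rewrite lift_perm_id.
  by rewrite lift_perm_lift permE ulsfK.
rewrite (@ochain_ext _ _ (fun j => (fun y => t (lift (s k) y)) (pi j))); last first.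
  by move=> j; rewrite /= permE ulsfK.
rewrite (ochain_perm (fun y => t (lift (s k) y)) pi) !scalerA; congr (_ *: _).
have -> : odd_perm s = odd k (+) odd (s k) (+) odd_perm pi.
  by rewrite {1}sE odd_lift_perm.
exact: sign_aux.
Qed.

Lemma bdy_noninj q (t : 'I_q.+2 -> T) a b : a != b -> t a = t b -> bdy t = 0.
Proof.
move=> ab tab; apply: vNv.
rewrite -{1}(@bdy_ext _ (fun k => t (tperm a b k)) t).
  by rewrite bdy_perm odd_tperm ab expr1 scaleN1r.
by move=> k; case: tpermP => // ->.
Qed.

Lemma BDmul q (t : 'I_q.+2 -> T) : (forall a b, t a != t b -> e (t a) (t b)) ->
  ochain e t *m bd e x0 q = bdy t.
Proof.
apply: ochain_mul.
- by move=> j; rewrite rowK.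
- exact: bdy_ext.
- exact: bdy_perm.
- exact: bdy_noninj.
Qed.

Lemma CHmul q (f : T -> T) (t : 'I_q.+1 -> T) : (forall a b, t a != t b -> e (t a) (t b)) ->
  ochain e t *m chmx e x0 f q = ochain e (fun k => f (t k)).
Proof.
apply: (@ochain_mul _ _ _ (fun t => ochain e (fun k => f (t k)))).
- by move=> j; rewrite rowK.
- by move=> t1 t2 H; apply: ochain_ext => k; rewrite H.
- by move=> t1 s; exact: (ochain_perm (fun k => f (t1 k)) s).
- by move=> t1 a b ab tab; apply: (ochain_noninj ab); rewrite tab.
Qed.

Lemma can_clique q (i : 'I_(nq e q)) n (g : 'I_n -> 'I_q.+1) a b :
  can x0 i (g a) != can x0 i (g b) -> e (can x0 i (g a)) (can x0 i (g b)).
Proof. by apply: simp_adj; apply: can_mem. Qed.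


Lemma bump1 (k l j : nat) : (l < k)%N -> bump l (bump k.-1 j) = bump k (bump l j).
Proof. rewrite /bump => h. do ![case: leqP => ? /=]; lia. Qed.
Lemma bump2 (k l j : nat) : (k <= l)%N -> bump l.+1 (bump k j) = bump k (bump l j).
Proof. rewrite /bump => h. do ![case: leqP => ? /=]; lia. Qed.

Lemma signS (a b : nat) : odd a = ~~ odd b -> (-1) ^+ a = - (-1) ^+ b :> rat.
Proof.
move=> H; rewrite -(@signr_odd _ a) -(@signr_odd _ b) H.
by case: (odd b); rewrite /= ?expr0 ?expr1 ?opprK.
Qed.

Lemma bdbd q : bd e x0 q.+1 *m bd e x0 q = 0.
Proof.
apply/row_matrixP => i; rewrite row_mul row0 rowK mulmx_suml.
transitivity (\sum_(k < q.+3) (-1) ^+ k *: bdy (fun j => can x0 i (lift k j))).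
  apply: eq_bigr => k _; rewrite -scalemxAl BDmul //.
  by move=> a b; exact: (@can_clique _ i _ (fun x : 'I_q.+2 => lift k x) a b).
rewrite /bdy.
under eq_bigr => k _ do rewrite scaler_sumr.
rewrite pair_big /=.
pose phi (p : 'I_q.+3 * 'I_q.+2) : 'I_q.+3 * 'I_q.+2 :=
  if (p.2 < p.1)%N then (inord p.2, inord p.1.-1) else (inord p.2.+1, inord p.1).
have phi1 p : ((phi p).1 : nat) = if (p.2 < p.1)%N then p.2 : nat else (p.2).+1.
  move: (ltn_ord p.1) (ltn_ord p.2) => h1 h2.
  by rewrite /phi; case: ifP => h /=; rewrite inordK //; lia.
have phi2 p : ((phi p).2 : nat) = if (p.2 < p.1)%N then (p.1 : nat).-1 else p.1.
  move: (ltn_ord p.1) (ltn_ord p.2) => h1 h2.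
  by rewrite /phi; case: ifP => h /=; rewrite inordK //; lia.
have phiK : involutive phi.
  have pE : forall (u v : 'I_q.+3 * 'I_q.+2), (u.1 : nat) = v.1 -> (u.2 : nat) = v.2 -> u = v.
    by case=> ? ? [? ?] /= /val_inj -> /val_inj ->.
  move=> [k l]; apply: pE.
    rewrite phi1 phi1 phi2 /=; case: (ltnP l k) => h /=; do ![case: leqP => ? /=]; lia.
  rewrite phi2 phi1 phi2 /=; case: (ltnP l k) => h /=; do ![case: leqP => ? /=]; lia.
apply: vNv.
rewrite {1}(reindex_inj (can_inj phiK)) -sumrN; apply: eq_bigr => p _.
rewrite !scalerA -scaleNr; congr (_ *: _).
  rewrite -!exprD; apply: signS.
  rewrite phi1 phi2; case: ifP => h.
    have -> : ((p.1 : nat) + p.2 = (p.2 + (p.1 : nat).-1).+1)%N.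
      by move: h; case: (nat_of_ord p.1) => // k _; rewrite /= addSn addnC. 
    by rewrite oddS negbK.
  by rewrite addSn oddS addnC.
apply: ochain_ext => j /=; congr (can x0 i _); apply: val_inj => /=.
rewrite phi1 phi2; case: ltnP => h.
  exact: bump1.
exact: bump2.
Qed.

Lemma chain_map q (f : T -> T) (f_cont : dcontinuous e f) :
  chmx e x0 f q.+1 *m bd e x0 q = bd e x0 q *m chmx e x0 f q.
Proof.
apply/row_matrixP => i; rewrite !row_mul !rowK mulmx_suml BDmul; last first.
  move=> a b fab; have ab : can x0 i a != can x0 i b.
    by apply: contraNneq fab => ->.
  case: (f_cont _ _ (@can_clique _ i _ id a b ab)) => // h.
  by rewrite h eqxx in fab.
apply: eq_bigr => k _; rewrite -scalemxAl CHmul //.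
by move=> a b; exact: (@can_clique _ i _ (fun x : 'I_q.+1 => lift k x) a b).
Qed.

Lemma tr_chmx q (f : T -> T) :
  (forall S, simplex e S -> f @: S != S) -> \tr (chmx e x0 f q) = 0.
Proof.
move=> Hf; rewrite /mxtrace big1 // => i _.
rewrite mxE ochainE big_pred0 // => r; apply/negP => /forallP H.
have HS : simplex e (simp i) by move: (simpP i); rewrite inE => /andP[].
move: (Hf _ HS) => /negP; apply; rewrite eqEsubset; apply/andP; split.
  apply/subsetP => y /imsetP [x /can_surj [k <-] ->].
  by rewrite (eqP (H k)) can_mem.
apply/subsetP => y /can_surj [m <-].
have -> : can x0 i m = f (can x0 i ((r^-1)%g m)).
  by rewrite (eqP (H _)) permKV.
by apply: imset_f; apply: can_mem.
Qed.

End Comb.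


Lemma telesc (a : nat -> rat) N :
  \sum_(q < N.+1) (-1) ^+ q * (- a q - (if (q : nat) is q'.+1 then a q' else 0))
  = - ((-1) ^+ N * a N).
Proof.
elim: N => [|N IH]; first by rewrite big_ord1 /= !expr0 !mul1r subr0.
rewrite big_ord_recr /= IH exprS.
set s := (-1) ^+ N; ring.
Qed.

Theorem theorem3p3 (T : finType) (e : rel T)
  (e_sym : symmetric e) (e_irr : irreflexive e)
  (f : T -> T) (f_cont : dcontinuous e f) :
  lefschetz e f != 0 ->
  exists S : {set T}, simplex e S /\ f @: S = S.
Proof.
move=> HL.
case: (boolP [exists S : {set T}, simplex e S && (f @: S == S)]).
  by move=> /existsP [S /andP [HS /eqP HfS]]; exists S.
move=> /existsPn Hn; exfalso; move: HL; apply/negP; rewrite negbK.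
have Hf : forall S, simplex e S -> f @: S != S.
  by move=> S HS; move: (Hn S); rewrite HS.
rewrite /lefschetz; case: pickP => [x0 _ | _]; last by [].
pose a q := tB (bd e x0 q) (chmx e x0 f q).
have hq : forall q, htrace e x0 f q = - a q - (if q is q'.+1 then a q' else 0).
  case => [|q] /=.
    have := @perq _ _ _ (0 : 'M[rat]_(nq e 0, 0)) (bd e x0 0) (chmx e x0 f 0)
      0 (chmx e x0 f 1) (mulmx0 _ _) _ (chain_map x0 0 f_cont).
    rewrite mulmx0 mul0mx => /(_ erefl).
    rewrite (tr_chmx x0 0 Hf).
    have -> : tB (0 : 'M[rat]_(nq e 0, 0)) (0 : 'M_0) = 0.
      by rewrite /tB /mxtrace big_ord0.
    rewrite /a; move=> H; lra.
  have := perq (bdbd e x0 q) (chain_map x0 q f_cont) (chain_map x0 q.+1 f_cont).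
  rewrite (tr_chmx x0 q.+1 Hf) /a => H; lra.
rewrite (eq_bigr (fun q : 'I_#|T|.+1 =>
   (-1) ^+ q * (- a q - (if (q : nat) is q'.+1 then a q' else 0)))); last first.
  by move=> q _; rewrite hq.
rewrite telesc.
have n0 : nq e #|T| = 0%N.
  apply/eqP; rewrite cards_eq0; apply/eqP/setP => S; rewrite !inE.
  by rewrite (ltn_eqF (leq_ltn_trans (max_card _) (ltnSn _))) andbF.
rewrite /a /tB /mxtrace big1 ?mulr0 ?oppr0 // => i.
by have := ltn_ord i; rewrite {2}n0.
Qed.
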